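(* Let $S=\{z\in\mathbb{C}: |\operatorname{Arg} z|\geq 3\pi/4\}$. For every $z\in S$ one has $\operatorname{Re}(\operatorname{erfc}(z))\geq 1$, where $\operatorname{erfc}(z)=\frac{2}{\sqrt{\pi}}\int_z^{\infty}e^{-u^2}\,du$. Moreover, equality $\operatorname{Re}(\operatorname{erfc}(z))=1$ holds for $z\in S$ if and only if $z=0$.
   Context: $\operatorname{Arg} z$ denotes the principal argument of $z$, taking values in $(-\pi,\pi]$; the point $z=0$ is regarded as belonging to $S$. The complementary error function $\operatorname{erfc}$ is the entire function $\operatorname{erfc}(z)=1-\operatorname{erf}(z)$ with $\operatorname{erf}(z)=\frac{2}{\sqrt{\pi}}\int_0^z e^{-u^2}\,du$ (integral along any path from $0$ to $z$). *)

(* Defs.v *)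
From Stdlib Require Import Reals.
From Coquelicot Require Import Coquelicot.
Open Scope R_scope.

Definition cexp (z : C) : C :=
  (exp (Re z) * cos (Im z), exp (Re z) * sin (Im z)).

Definition is_Arg (z : C) (theta : R) : Prop :=
  - PI < theta <= PI /\ z = (Cmod z * cos theta, Cmod z * sin theta).

Definition in_S (z : C) : Prop :=
  z = 0%C \/ exists theta, is_Arg z theta /\ 3 * PI / 4 <= Rabs theta.

(* erf z = 2/sqrt(pi) * int_0^z e^(-u^2) du, integrated along the straight
   segment u = t z, t in [0,1]:  int_0^1 z e^(-(t z)^2) dt. *)
Definition erf (z : C) : C :=
  Cmult (RtoC (2 / sqrt PI))
    (RInt (V := C_R_CompleteNormedModule)
       (fun t : R => Cmult z (cexp (Copp (Cmult (Cmult (RtoC t) z) (Cmult (RtoC t) z))))) 0 1).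

Definition erfc (z : C) : C := Cminus 1%C (erf z).

(* Main.v *)
Require Import Defs.
From Stdlib Require Import Reals Lra.
From Coquelicot Require Import Coquelicot.
Open Scope R_scope.

Lemma Re_Riemann_sum (f : R -> C) ptd :
  Re (Riemann_sum (V:=C_R_CompleteNormedModule) f ptd) = Riemann_sum (fun t => Re (f t)) ptd.
Proof.
  induction ptd using SF_cons_ind.
  - unfold Riemann_sum; simpl. reflexivity.
  - rewrite !Riemann_sum_cons. rewrite <- IHptd.
    destruct (Riemann_sum f ptd) as [p q]. simpl.
    unfold plus, scal; simpl. unfold mult; simpl. reflexivity.
Qed.

Lemma Re_RInt (f : R -> C) a b :
  ex_RInt (V:=C_R_CompleteNormedModule) f a b ->
  Re (RInt (V:=C_R_CompleteNormedModule) f a b) = RInt (fun t => Re (f t)) a b.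
Proof.
  intros Hex. symmetry. apply is_RInt_unique.
  pose proof (RInt_correct _ _ _ Hex) as H.
  unfold is_RInt in *.
  eapply filterlim_ext.
  2: { eapply filterlim_comp. exact H.
       destruct (RInt (V:=C_R_CompleteNormedModule) f a b) as [p q]. exact (continuous_fst (U:=R_UniformSpace) (V:=R_UniformSpace) p q). }
  intros ptd. simpl. rewrite <- Re_Riemann_sum.
  reflexivity.
Qed.

Lemma cont_C (u v : R -> R) t :
  continuous u t -> continuous v t ->
  @continuous R_UniformSpace C_R_CompleteNormedModule (fun s => (u s, v s) : C) t.
Proof.
  intros Hu Hv.
  apply (continuous_comp_2 (W:=R_UniformSpace) (X:=prod_UniformSpace R_UniformSpace R_UniformSpace) u v (fun a b => (a,b))); auto.
  eapply continuous_ext. 2: apply continuous_id. intros [p q]; reflexivity.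
Qed.

Definition integrand (z : C) (t : R) : C :=
  Cmult z (cexp (Copp (Cmult (Cmult (RtoC t) z) (Cmult (RtoC t) z)))).

Lemma integrand_ex (z : C) :
  ex_RInt (V:=C_R_CompleteNormedModule) (integrand z) 0 1.
Proof.
  apply ex_RInt_continuous. intros s _.
  destruct z as [a b].
  eapply (@continuous_ext R_UniformSpace C_R_CompleteNormedModule (fun t => (fst (integrand (a,b) t), snd (integrand (a,b) t)) : C)).
  { intros t. symmetry. apply surjective_pairing. }
  apply cont_C; apply (@ex_derive_continuous R_AbsRing R_NormedModule); unfold integrand, cexp; simpl; auto_derive; auto.
Qed.

Definition g (a b t : R) : R :=
  exp (t*t*(b*b - a*a)) * (a * cos (2*t*t*a*b) + b * sin (2*t*t*a*b)).

Lemma Re_integrand a b t : Re (integrand (a,b) t) = g a b t.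
Proof.
  unfold integrand, cexp, g; simpl.
  replace (- ((t * a - 0 * b) * (t * b + 0 * a) + (t * b + 0 * a) * (t * a - 0 * b)))
    with (- (2*t*t*a*b)) by ring.
  replace (- ((t * a - 0 * b) * (t * a - 0 * b) - (t * b + 0 * a) * (t * b + 0 * a)))
    with (t*t*(b*b - a*a)) by ring.
  rewrite cos_neg, sin_neg. ring.
Qed.

Lemma Re_RtoC_mult c w : Re (Cmult (RtoC c) w) = c * Re w.
Proof. destruct w; simpl; ring. Qed.

Lemma Re_erf a b : Re (erf (a,b)) = 2 / sqrt PI * RInt (g a b) 0 1.
Proof.
  unfold erf. rewrite Re_RtoC_mult.
  pose proof (Re_RInt (integrand (a,b)) 0 1 (integrand_ex (a,b))) as H. unfold integrand in H. rewrite H.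
  rewrite (RInt_ext _ (g a b)).
  2: { intros t _. apply (Re_integrand a b t). }
  reflexivity.
Qed.


Definition dg (a b t : R) : R :=
  exp (t*t*(b*b - a*a)) * (sin (2*t*t*a*b) * (1 + 2*t*t*(b*b - a*a)) + 4*t*t*a*b * cos (2*t*t*a*b)).

Definition h (a b t : R) : R := t * exp (t*t*(b*b - a*a)) * sin (2*t*t*a*b).

Lemma g_deriv a b t : is_derive (fun u => g a u t) b (dg a b t).
Proof. unfold g, dg. auto_derive; auto. unfold Rminus; ring. Qed.

Lemma h_deriv a b t : is_derive (fun s => h a b s) t (dg a b t).
Proof. unfold h, dg. auto_derive; auto. unfold Rminus; ring. Qed.

Ltac c2d :=
  repeat first
    [ apply continuity_2d_pt_mult
    | apply continuity_2d_pt_plus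
    | apply continuity_2d_pt_minus
    | apply continuity_2d_pt_opp
    | apply (continuity_1d_2d_pt_comp exp); [apply derivable_continuous_pt, derivable_pt_exp|]
    | apply (continuity_1d_2d_pt_comp sin); [apply derivable_continuous_pt, derivable_pt_sin|]
    | apply (continuity_1d_2d_pt_comp cos); [apply derivable_continuous_pt, derivable_pt_cos|]
    | apply continuity_2d_pt_id1
    | apply continuity_2d_pt_id2
    | apply continuity_2d_pt_const ].

Lemma F_deriv a b :
  is_derive (fun u => RInt (fun t => g a u t) 0 1) b (exp (b*b - a*a) * sin (2*a*b)).
Proof.
  assert (E : exp (b*b - a*a) * sin (2*a*b) = RInt (fun t => Derive (fun u => g a u t) b) 0 1).
  { rewrite (RInt_ext _ (dg a b)).
    2: { intros t _. apply is_derive_unique, g_deriv. }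
    symmetry. apply is_RInt_unique.
    replace (exp (b*b - a*a) * sin (2*a*b)) with (minus (h a b 1) (h a b 0)).
    2: { unfold h, minus, plus, opp; simpl.
         replace (1*1*(b*b-a*a)) with (b*b-a*a) by ring.
         replace (2*1*1*a*b) with (2*a*b) by ring.
         replace (2*0*0*a*b) with 0 by ring. rewrite sin_0. ring. }
    apply (is_RInt_derive (fun s => h a b s)).
    - intros; apply h_deriv.
    - intros. apply (@ex_derive_continuous R_AbsRing R_NormedModule). unfold dg. auto_derive; auto. }
  rewrite E.
  apply (is_derive_RInt_param (fun u t => g a u t)).
  - apply filter_forall. intros. eexists. apply g_deriv.
  - intros t _.
    apply (continuity_2d_pt_ext (fun u v => dg a u v)).
    { intros u v. symmetry. apply is_derive_unique, g_deriv. }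
    unfold dg. c2d.
  - apply filter_forall. intros y. apply (@ex_RInt_continuous R_CompleteNormedModule). intros.
    apply (@ex_derive_continuous R_AbsRing R_NormedModule). unfold g. auto_derive; auto.
Qed.


Lemma deriv_cont (f df : R -> R) y : (forall y, is_derive f y (df y)) -> continuity_pt f y.
Proof.
  intros Hd. apply continuity_pt_filterlim.
  apply (@ex_derive_continuous R_AbsRing R_NormedModule). eexists. apply Hd.
Qed.

Lemma mvt_le (f df : R -> R) a b : a <= b -> (forall y, is_derive f y (df y)) ->
  exists c, a <= c <= b /\ f b - f a = df c * (b - a).
Proof.
  intros Hab Hd.
  destruct (MVT_gen f a b df) as [c [Hc E]].
  - intros; apply Hd.
  - intros; apply (deriv_cont f df); auto.
  - exists c. rewrite Rmin_left, Rmax_right in Hc by lra. auto.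
Qed.

Lemma pos_deriv (f df : R -> R) x : (forall y, is_derive f y (df y)) ->
  (forall y, 0 <= y -> 0 <= df y) -> (forall y, 0 < y -> 0 < df y) -> 0 < x -> f 0 < f x.
Proof.
  intros Hd H0 H1 Hx.
  destruct (mvt_le f df 0 (x/2)) as [c1 [Hc1 E1]]; auto; try lra.
  destruct (mvt_le f df (x/2) x) as [c2 [Hc2 E2]]; auto; try lra.
  assert (0 <= df c1) by (apply H0; lra).
  assert (0 < df c2) by (apply H1; lra).
  assert (0 <= df c1 * (x/2 - 0)) by (apply Rmult_le_pos; lra).
  assert (0 < df c2 * (x - x/2)) by (apply Rmult_lt_0_compat; lra).
  lra.
Qed.

Definition J (x : R) := RInt (fun u => exp (- (u*u))) 0 x.

Lemma J_deriv y : is_derive J y (exp (- (y*y))).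
Proof.
  unfold J.
  apply (is_derive_RInt (V:=R_NormedModule) (fun u => exp (- (u*u))) (fun b => RInt (fun u => exp (-(u*u))) 0 b) 0 y).
  - apply filter_forall. intros b. apply (@RInt_correct R_CompleteNormedModule).
    apply (@ex_RInt_continuous R_CompleteNormedModule). intros.
    apply (@ex_derive_continuous R_AbsRing R_NormedModule). auto_derive; auto.
  - apply (@ex_derive_continuous R_AbsRing R_NormedModule). auto_derive; auto.
Qed.

Lemma J0 : J 0 = 0.
Proof. unfold J. apply (@RInt_point R_CompleteNormedModule). Qed.

Lemma J_bound x : 0 < x -> 0 < x * J x - 1 + exp (- (x*x)).
Proof.
  intros Hx.
  assert (Hk : forall y, 0 < y -> 0 < J y - y * exp (- (y*y))).
  { intros y Hy.
    pose proof (pos_deriv (fun y => J y - y * exp (-(y*y))) (fun y => 2*y*y*exp(-(y*y))) y) as P.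
    simpl in P. rewrite J0 in P. replace (0 - 0 * exp (- (0 * 0))) with 0 in P by ring.
    apply P; auto.
    - intros z. auto_derive. eexists; apply J_deriv.
      replace (Derive (fun x0 => J x0) z) with (exp (-(z*z))) by (symmetry; apply is_derive_unique, J_deriv). ring.
    - intros z Hz. pose proof (exp_pos (-(z*z))). nra.
    - intros z Hz. pose proof (exp_pos (-(z*z))). assert (0 < z*z) by nra. nra. }
  pose proof (pos_deriv (fun y => y * J y - 1 + exp (-(y*y))) (fun y => J y - y * exp (-(y*y))) x) as P.
  simpl in P. rewrite J0 in P. replace (0 * 0 - 1 + exp (- (0 * 0))) with 0 in P.
  2: { replace (-(0*0)) with 0 by ring. rewrite exp_0. ring. }
  apply P; auto.
  - intros z. auto_derive. eexists; apply J_deriv.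
    replace (Derive (fun x0 => J x0) z) with (exp (-(z*z))) by (symmetry; apply is_derive_unique, J_deriv). ring.
  - intros z Hz. destruct (Req_dec z 0) as [->|Hz'].
    + rewrite J0. replace (-(0*0)) with 0 by ring. lra.
    + apply Rlt_le, Hk. lra.
Qed.


Lemma F0 x : RInt (fun t => g (-x) 0 t) 0 1 = - J x.
Proof.
  assert (E1 : RInt (fun t => scal x (exp (-((x*t+0)*(x*t+0))))) 0 1 = J x).
  { rewrite (RInt_comp_lin (V:=R_CompleteNormedModule) (fun u => exp (-(u*u)))).
    - unfold J. f_equal; ring.
    - apply (@ex_RInt_continuous R_CompleteNormedModule). intros.
      apply (@ex_derive_continuous R_AbsRing R_NormedModule). auto_derive; auto. }
  rewrite <- E1.
  rewrite (RInt_ext _ (fun t => opp (scal x (exp (-((x*t+0)*(x*t+0))))))).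
  2: { intros t _. unfold g, opp, scal; simpl. unfold mult; simpl.
       replace (2*t*t*-x*0) with 0 by ring. rewrite cos_0, sin_0.
       replace (t * t * (0 * 0 - - x * - x)) with (-((x*t+0)*(x*t+0))) by ring. ring. }
  rewrite (RInt_opp (V:=R_CompleteNormedModule)). reflexivity.
  apply (@ex_RInt_continuous R_CompleteNormedModule). intros.
  apply (@ex_derive_continuous R_AbsRing R_NormedModule). unfold scal; simpl; unfold mult; simpl. auto_derive; auto.
Qed.

Lemma key x b : 0 < x -> 0 <= b <= x -> RInt (fun t => g (-x) b t) 0 1 < 0.
Proof.
  intros Hx Hb.
  set (F := fun u => RInt (fun t => g (-x) u t) 0 1).
  set (K := fun u => exp (-(x*x)) * (exp (u*u) * (cos (2*x*u) + 1) / (2*x))).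
  set (dT := fun u => - exp (-(x*x)) * (u * exp (u*u) * (cos (2*x*u) + 1) / x)).
  assert (HT : forall u, is_derive (fun u => F u - K u) u (dT u)).
  { intros u.
    assert (HF := F_deriv (-x) u). fold F in HF. 
    replace (dT u) with (exp (u*u - -x * -x) * sin (2 * -x * u) - 
       exp (-(x*x)) * ((2*u*exp(u*u)*(cos (2*x*u)+1) - exp (u*u) * (2*x*sin (2*x*u))) / (2*x))).
    2: { unfold dT. replace (u*u - -x * -x) with (u*u + -(x*x)) by ring. rewrite exp_plus.
         replace (2 * -x * u) with (-(2*x*u)) by ring. rewrite sin_neg. field. lra. }
    apply (@is_derive_minus R_AbsRing R_NormedModule). exact HF.
    unfold K. auto_derive; auto. field. lra. }
  destruct (mvt_le (fun u => F u - K u) dT 0 b) as [c [Hc E]]; try lra; auto.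
  assert (HdT : dT c <= 0).
  { unfold dT. pose proof (exp_pos (-(x*x))). pose proof (exp_pos (c*c)).
    pose proof (COS_bound (2*x*c)).
    assert (0 <= c * exp (c*c) * (cos (2*x*c)+1) / x).
    { apply Rmult_le_pos. apply Rmult_le_pos. nra. lra. left; apply Rinv_0_lt_compat; lra. }
    nra. }
  assert (Hle : F b - K b <= F 0 - K 0).
  { assert (dT c * (b - 0) <= 0) by nra. lra. }
  assert (HF0 : F 0 = - J x) by apply F0.
  assert (HK0 : K 0 = exp (-(x*x)) / x).
  { unfold K. replace (0*0) with 0 by ring. replace (2*x*0) with 0 by ring.
    rewrite exp_0, cos_0. field. lra. }
  assert (HKb : K b <= 1 / x).
  { unfold K. pose proof (COS_bound (2*x*b)).
    assert (exp (-(x*x)) * exp (b*b) <= 1).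
    { rewrite <- exp_plus. rewrite <- exp_0. destruct (Req_dec (- (x * x) + b * b) 0) as [E0|E0]; [rewrite E0; lra|]. left; apply exp_increasing. nra. }
    pose proof (exp_pos (-(x*x))). pose proof (exp_pos (b*b)).
    replace (exp (- (x * x)) * (exp (b * b) * (cos (2 * x * b) + 1) / (2 * x)))
      with ((exp (- (x * x)) * exp (b * b)) * ((cos (2 * x * b) + 1) / 2) * (1 / x)) by (field; lra).
    assert (0 < 1/x) by (apply Rdiv_lt_0_compat; lra).
    assert (0 <= (cos (2 * x * b) + 1) / 2 <= 1) by lra.
    assert (0 <= exp (- (x * x)) * exp (b * b)) by nra.
    assert ((exp (- (x * x)) * exp (b * b)) * ((cos (2 * x * b) + 1) / 2) <= 1) by nra.
    nra. }
  pose proof (J_bound x Hx) as HJ.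
  assert (Hneg : x * F b < 0).
  { assert (H1 : x * F b <= x * (F 0 - K 0 + K b)) by (apply Rmult_le_compat_l; lra).
    rewrite HF0, HK0 in H1.
    assert (x * (- J x - exp (- (x * x)) / x + K b) <= - x * J x - exp (-(x*x)) + 1).
    { assert (x * K b <= 1). { apply (Rmult_le_compat_l x) in HKb; [|lra]. 
        replace (x * (1/x)) with 1 in HKb by (field; lra). exact HKb. }
      replace (x * (- J x - exp (- (x * x)) / x + K b)) with (- x * J x - exp (-(x*x)) + x * K b) by (field; lra).
      lra. }
    lra. }
  unfold F in Hneg. nra.
Qed.


Lemma trig_sector phi : 3 * PI / 4 <= phi <= PI ->
  cos phi < 0 /\ 0 <= sin phi /\ sin phi + cos phi <= 0.
Proof.
  intros Hp. pose proof PI_RGT_0.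
  split; [apply cos_lt_0; lra|].
  split; [apply sin_ge_0; lra|].
  assert (Hs : sin (phi + PI/4) <= 0) by (apply sin_le_0; lra).
  rewrite sin_plus, sin_PI4, cos_PI4 in Hs.
  assert (0 < sqrt 2) by (apply sqrt_lt_R0; lra).
  replace (sin phi * (1 / sqrt 2) + cos phi * (1 / sqrt 2)) with ((sin phi + cos phi) / sqrt 2) in Hs by (field; lra).
  destruct (Rle_or_lt (sin phi + cos phi) 0); auto.
  exfalso. assert (0 < (sin phi + cos phi) / sqrt 2) by (apply Rdiv_lt_0_compat; lra). lra.
Qed.

Lemma g_even a b t : g a (-b) t = g a b t.
Proof.
  unfold g. replace (2*t*t*a*(-b)) with (-(2*t*t*a*b)) by ring.
  rewrite cos_neg, sin_neg. replace (-b * -b) with (b*b) by ring. ring.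
Qed.

Lemma sector_neg (z : C) : in_S z -> z <> 0%C -> Re (erf z) < 0.
Proof.
  intros [H0|[th [[Hth Hz] Habs]]] Hnz; [contradiction|].
  destruct z as [p q].
  assert (Hp : p = Cmod (p,q) * cos th) by (apply (f_equal fst) in Hz; exact Hz).
  assert (Hq : q = Cmod (p,q) * sin th) by (apply (f_equal snd) in Hz; exact Hz).
  set (r := Cmod (p,q)) in *.
  assert (Hr : 0 < r).
  { destruct (Cmod_ge_0 (p,q)) as [Hlt|Heq]; auto. exfalso. apply Hnz, Cmod_eq_0. auto. }
  assert (Htrig : p < 0 /\ Rabs q <= - p).
  { destruct (Rle_or_lt 0 th) as [Hpos|Hneg].
    - rewrite Rabs_right in Habs by lra.
      destruct (trig_sector th) as [A [B C]]; [lra|].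
      split; [rewrite Hp; nra|]. rewrite Hq, Rabs_right; [nra|]. nra.
    - rewrite Rabs_left in Habs by lra.
      destruct (trig_sector (-th)) as [A [B C]]; [lra|].
      rewrite cos_neg in A, C. rewrite sin_neg in B, C.
      split; [rewrite Hp; nra|]. rewrite Hq, Rabs_left1; [nra|]. nra. }
  destruct Htrig as [Hp0 Hq0].
  rewrite Re_erf.
  assert (HI : RInt (g p q) 0 1 < 0).
  { replace p with (- (-p)) by ring.
    destruct (Rle_or_lt 0 q).
    - apply key; [lra|]. rewrite Rabs_right in Hq0; lra.
    - rewrite (RInt_ext _ (fun t => g (- - p) (-q) t)).
      + apply key; [lra|]. rewrite Rabs_left in Hq0; lra.
      + intros t _. symmetry. apply g_even. }
  assert (0 < 2 / sqrt PI).
  { apply Rdiv_lt_0_compat; [lra|]. apply sqrt_lt_R0, PI_RGT_0. }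
  nra.
Qed.

Lemma erf_zero : Re (erf (0,0)) = 0.
Proof.
  rewrite Re_erf.
  rewrite (RInt_ext _ (fun _ => 0)).
  - rewrite RInt_const. unfold scal; simpl; unfold mult; simpl. ring.
  - intros t _. change (g 0 0 t = 0%R). unfold g. ring.
Qed.

Lemma erf_zeroC : Re (erf 0%C) = 0.
Proof. exact erf_zero. Qed.

Theorem mainTheorem1 :
  forall z : C, in_S z ->
    1 <= Re (erfc z) /\ (Re (erfc z) = 1 <-> z = 0%C).
Proof.
  intros z Hz.
  assert (E : Re (erfc z) = 1 - Re (erf z)) by (unfold erfc; simpl; ring).
  rewrite E.
  destruct (Ceq_dec z 0%C) as [->|Hnz].
  - rewrite erf_zeroC. split; [lra|]. split; auto. intros; lra.
  - pose proof (sector_neg z Hz Hnz). split; [lra|]. split; intros; [lra|contradiction].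
Qed.
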